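(* Let $R$ be an arithmetic ring with Jacobson radical $J(R)$. Then the following are equivalent: (1) $R$ has a unique minimal prime ideal; (2) for every $d\in R\setminus J(R)$, the annihilator $(0:d)$ is contained in $J(R)$.
   Context: All rings are commutative with identity. $R$ is arithmetic if $R_M$ is a valuation ring (ideals totally ordered by inclusion) for every maximal ideal $M$. *)

(* Defs.v *)
From mathcomp Require Import all_boot all_algebra.
Set Implicit Arguments. Unset Strict Implicit. Unset Printing Implicit Defensive.
Import GRing.Theory.
Local Open Scope ring_scope.

Section Ideals.
Variable R : comNzRingType.

Definition is_ideal (I : R -> Prop) : Prop :=
  [/\ I 0, (forall x y, I x -> I y -> I (x + y)) & (forall r x, I x -> I (r * x))].

Definition subideal (I K : R -> Prop) : Prop := forall x, I x -> K x.
Definition same_ideal (I K : R -> Prop) : Prop := forall x, I x <-> K x.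

Definition is_prime_ideal (P : R -> Prop) : Prop :=
  [/\ is_ideal P, ~ P 1 & (forall a b, P (a * b) -> P a \/ P b)].

Definition is_maximal_ideal (M : R -> Prop) : Prop :=
  [/\ is_ideal M, ~ M 1 &
      (forall I, is_ideal I -> subideal M I -> I 1 \/ subideal I M)].

Definition is_minimal_prime (P : R -> Prop) : Prop :=
  is_prime_ideal P /\ (forall Q, is_prime_ideal Q -> subideal Q P -> subideal P Q).

Definition jacobson (x : R) : Prop := forall M, is_maximal_ideal M -> M x.

Definition ann (d : R) (x : R) : Prop := x * d = 0.

(* Localization R_M at a maximal ideal M, built from fractions a/s = (a, s)
   with s outside M, modulo  (a,s) ~ (b,t)  iff  u (a t - b s) = 0 for some u not in M. *)
Definition loc_valid (M : R -> Prop) (p : R * R) : Prop := ~ M p.2.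

Definition loc_equiv (M : R -> Prop) (p q : R * R) : Prop :=
  exists u, ~ M u /\ u * (p.1 * q.2 - q.1 * p.2) = 0.

Definition loc_add (p q : R * R) : R * R := (p.1 * q.2 + q.1 * p.2, p.2 * q.2).
Definition loc_mul (p q : R * R) : R * R := (p.1 * q.1, p.2 * q.2).

(* An ideal of R_M, as a predicate on fractions compatible with equality in R_M. *)
Definition is_loc_ideal (M : R -> Prop) (I : R * R -> Prop) : Prop :=
  [/\ I (0, 1),
      (forall p q, loc_valid M p -> loc_valid M q -> loc_equiv M p q -> I p -> I q),
      (forall p q, loc_valid M p -> loc_valid M q -> I p -> I q -> I (loc_add p q))
    & (forall r p, loc_valid M r -> loc_valid M p -> I p -> I (loc_mul r p))].

Definition loc_valuation (M : R -> Prop) : Prop :=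
  forall I K, is_loc_ideal M I -> is_loc_ideal M K ->
    (forall p, loc_valid M p -> I p -> K p) \/
    (forall p, loc_valid M p -> K p -> I p).

Definition arithmetic : Prop :=
  forall M, is_maximal_ideal M -> loc_valuation M.

End Ideals.

(* Main.v *)
Require Import Defs.
From mathcomp Require Import all_boot all_algebra.
From mathcomp Require Import classical_sets.
From mathcomp Require Import ring.
From Stdlib Require Import Classical.
Set Implicit Arguments. Unset Strict Implicit. Unset Printing Implicit Defensive.
Import GRing.Theory.
Local Open Scope ring_scope.

Section Aux.
Variable R : comNzRingType.

Lemma exists_max (I S : R -> Prop) : is_ideal I -> (forall x, I x -> ~ S x) ->
  exists A : R -> Prop, [/\ is_ideal A, subideal I A, (forall x, A x -> ~ S x) &
    (forall B, is_ideal B -> subideal A B -> (forall x, B x -> ~ S x) -> subideal B A)].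
Proof.
move=> hI hIS.
pose P := fun K : R -> Prop => K = (fun _ => False) \/
  [/\ is_ideal K, subideal I K & forall x, K x -> ~ S x].
have [|A [PA Amax]] := @Zorn_bigcup R P.
  move=> F FP Ftot.
  case: (classic (exists K, F K /\ K <> (fun _ => False))) => [[K0 [FK0 K0n]]|hno].
    right.
    have gen : forall K, F K -> K <> (fun _ => False) ->
        [/\ is_ideal K, subideal I K & forall x, K x -> ~ S x].
      by move=> K FK Kn; case: (FP K FK).
    have [[i0 iD iM] IK0 K0S] := gen K0 FK0 K0n.
    split.
    - split.
      + by exists K0.
      + move=> x y [K1 FK1 K1x] [K2 FK2 K2y].
        have K1n : K1 <> (fun _ => False) by move=> e; rewrite e in K1x.
        have K2n : K2 <> (fun _ => False) by move=> e; rewrite e in K2y.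
        have [[_ a1 _] _ _] := gen K1 FK1 K1n.
        have [[_ a2 _] _ _] := gen K2 FK2 K2n.
        case: (Ftot K1 K2 FK1 FK2) => sub.
        * by exists K2 => //; apply: a2 => //; apply: sub.
        * by exists K1 => //; apply: a1 => //; apply: sub.
      + move=> r x [K1 FK1 K1x].
        have K1n : K1 <> (fun _ => False) by move=> e; rewrite e in K1x.
        have [[_ _ m1] _ _] := gen K1 FK1 K1n.
        by exists K1 => //; apply: m1.
    - by move=> x Ix; exists K0 => //; apply: IK0.
    - move=> x [K1 FK1 K1x].
      have K1n : K1 <> (fun _ => False) by move=> e; rewrite e in K1x.
      have [_ _ s1] := gen K1 FK1 K1n.
      exact: s1.
  left; apply: boolp.funext => x; apply: boolp.propext; split => //.
  case=> K FK Kx; apply: hno; exists K; split => //.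
  by move=> e; rewrite e in Kx.
have hA : [/\ is_ideal A, subideal I A & forall x, A x -> ~ S x].
  case: PA => // eA; exfalso; apply: (Amax I).
    split; first by rewrite eA => x.
    rewrite eA => h; case: hI => i0 _ _; exact: (h 0 i0).
  by right; split.
case: hA => hAi hIA hAS; exists A; split => //.
move=> B hB AB BS x Bx.
apply: NNPP => nAx.
apply: (Amax B); last by right; split => // y Iy; apply: AB; apply: hIA.
split => // h; apply: nAx; exact: h.
Qed.

Lemma max_prime (M : R -> Prop) : is_maximal_ideal M -> is_prime_ideal M.
Proof.
case=> [[m0 mD mM] m1 mmax]; split; [by split | by [] |].
move=> a b Mab; case: (classic (M a)) => Ma; [by left|right].
pose K := fun x => exists m r, M m /\ x = m + r * a.
have hK : is_ideal K.
  split.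
  - by exists 0, 0; rewrite mul0r addr0.
  - move=> x y [m [r [Mm ->]]] [m' [r' [Mm' ->]]].
    exists (m + m'), (r + r'); split; first exact: mD.
    by rewrite mulrDl !addrA; congr (_ + _); rewrite -!addrA [r * a + _]addrC.
  - move=> s x [m [r [Mm ->]]]; exists (s * m), (s * r); split; first exact: mM.
    by rewrite mulrDr mulrA.
case: (mmax K hK).
- by move=> x Mx; exists x, 0; rewrite mul0r addr0.
- case=> m [r [Mm e]].
  have -> : b = b * m + r * (a * b).
    by rewrite -{1}(mul1r b) e mulrDl (mulrC m) mulrA.
  by apply: mD; apply: mM.
- by move=> sub; exfalso; apply: Ma; apply: sub; exists 0, 1; rewrite add0r mul1r.
Qed.

Lemma max_exists (I : R -> Prop) : is_ideal I -> ~ I 1 ->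
  exists M, is_maximal_ideal M /\ subideal I M.
Proof.
move=> hI nI1.
have [|A [hA IA AS Amax]] := @exists_max I (fun x => x = 1) hI.
  by move=> x Ix e; apply: nI1; rewrite -e.
exists A; split => //; split => //; first by move=> h; exact: (AS 1 h).
move=> K hK AK; case: (classic (K 1)) => K1; [by left|right].
apply: Amax => // x Kx e; apply: K1; by rewrite -e.
Qed.

Lemma prime_exists (S : R -> Prop) : S 1 -> (forall x y, S x -> S y -> S (x * y)) ->
  ~ S 0 -> exists P, is_prime_ideal P /\ forall x, P x -> ~ S x.
Proof.
move=> S1 SM S0.
have hI : is_ideal (fun x : R => x = 0).
  by split => //; [move=> x y -> ->; rewrite addr0 | move=> r x ->; rewrite mulr0].
have [|A [hA _ AS Amax]] := @exists_max (fun x => x = 0) S hI.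
  by move=> x ->.
exists A; split => //; split => //; first by move=> h; exact: (AS 1 h).
move=> a b Aab; apply: NNPP => /not_or_and [na nb].
case: hA => a0 aD aM.
have key : forall c, ~ A c -> exists s p r, [/\ S s, A p & s = p + r * c].
  move=> c nc; apply: NNPP => hno.
  pose K := fun x => exists p r, A p /\ x = p + r * c.
  have hK : is_ideal K.
    split.
    - by exists 0, 0; rewrite mul0r addr0.
    - move=> x y [m [r [Mm ->]]] [m' [r' [Mm' ->]]].
      exists (m + m'), (r + r'); split; first exact: aD.
      by rewrite mulrDl !addrA; congr (_ + _); rewrite -!addrA [r * c + _]addrC.
    - move=> s x [m [r [Mm ->]]]; exists (s * m), (s * r); split; first exact: aM.
      by rewrite mulrDr mulrA.
  have : subideal K A.
    apply: Amax => //.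
      by move=> x Ax; exists x, 0; rewrite mul0r addr0.
    move=> x [p [r [Ap e]]] Sx; apply: hno; exists x, p, r; split => //.
  move=> sub; apply: nc; apply: sub; exists 0, 1; rewrite add0r mul1r //.
have [s1 [p1 [r1 [S1' A1 e1]]]] := key a na.
have [s2 [p2 [r2 [S2' A2 e2]]]] := key b nb.
apply: (AS (s1 * s2)); last exact: SM.
have -> : s1 * s2 = p1 * s2 + ((r1 * a) * p2 + (r1 * r2) * (a * b)).
  by rewrite e1 e2; ring.
apply: (aD); first by rewrite mulrC; apply: (aM).
by apply: (aD); apply: (aM).
Qed.

Lemma loc_ideal_of (M P : R -> Prop) : is_prime_ideal P -> subideal P M ->
  is_loc_ideal M (fun p => P p.1).
Proof.
case=> [[p0 pD pM] p1 pP] PM; split => //=.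
- move=> [a s] [b t] /= vs vt [u [nu e]] /= Pa.
  have : P (u * (b * s)).
    have -> : u * (b * s) = u * (a * t).
      by apply/eqP; rewrite eq_sym -subr_eq0 -mulrBr; move: e => /= ->.
    by apply: (pM); rewrite mulrC; apply: (pM).
  case/pP => [Pu|]; first by exfalso; apply: (nu); apply: (PM).
  case/pP => // Ps; exfalso; apply: (vs); exact: PM.
- move=> [a s] [b t] /= _ _ Pa Pb; apply: (pD); rewrite mulrC; exact: pM.
- move=> [r s] [a t] /= _ _ Pa; exact: pM.
Qed.

Lemma primes_chain (M : R -> Prop) : is_maximal_ideal M -> loc_valuation M ->
  forall P1 P2, is_prime_ideal P1 -> is_prime_ideal P2 -> subideal P1 M -> subideal P2 M ->
  subideal P1 P2 \/ subideal P2 P1.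
Proof.
move=> hM hv P1 P2 h1 h2 s1 s2.
have M1 : ~ M 1 by case: hM.
case: (hv _ _ (loc_ideal_of h1 s1) (loc_ideal_of h2 s2)) => h.
  by left => x Px; exact: (h (x, 1)).
by right => x Px; exact: (h (x, 1)).
Qed.

Definition Qm (M : R -> Prop) (x : R) := forall P, is_prime_ideal P -> subideal P M -> P x.

Lemma Qm_sub M : is_maximal_ideal M -> subideal (Qm M) M.
Proof. by move=> hM x Qx; apply: Qx => //; exact: max_prime. Qed.

Lemma Qm_prime M : is_maximal_ideal M -> loc_valuation M -> is_prime_ideal (Qm M).
Proof.
move=> hM hv; split.
- split.
  + by move=> P [[]].
  + by move=> x y Qx Qy P hP sP; case: (hP) => [[_ pD _] _ _]; apply: (pD); [apply: Qx|apply: Qy].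
  + by move=> r x Qx P hP sP; case: (hP) => [[_ _ pM] _ _]; apply: (pM); apply: (Qx).
- by move=> Q1; case: (hM) => _ M1 _; apply: (M1); apply: Qm_sub.
- move=> a b Qab; apply: NNPP => /not_or_and [na nb].
  case: (not_all_ex_not _ _ na) => P1 H1; have [h1 H1'] := imply_to_and _ _ H1; have [s1 n1] := imply_to_and _ _ H1'.
  case: (not_all_ex_not _ _ nb) => P2 H2; have [h2 H2'] := imply_to_and _ _ H2; have [s2 n2] := imply_to_and _ _ H2'.
  case: (primes_chain hM hv h1 h2 s1 s2) => sub.
  + case: (h1) => _ _ pP; case: (pP a b (Qab P1 h1 s1)) => // b1.
    by apply: (n2); apply: (sub).
  + case: (h2) => _ _ pP; case: (pP a b (Qab P2 h2 s2)) => // a2.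
    by apply: (n1); apply: (sub).
Qed.

Lemma Qm_min M : is_maximal_ideal M -> loc_valuation M -> is_minimal_prime (Qm M).
Proof.
move=> hM hv; split; first exact: Qm_prime.
move=> Q hQ sQ x Qx; apply: Qx => // y Qy; apply: Qm_sub => //; exact: sQ.
Qed.

Lemma min_in M P : is_maximal_ideal M -> loc_valuation M -> is_minimal_prime P -> subideal P M ->
  same_ideal P (Qm M).
Proof.
move=> hM hv [hP Pmin] sP.
have s1 : subideal (Qm M) P by move=> x Qx; exact: Qx.
have s2 := Pmin _ (Qm_prime hM hv) s1.
by move=> x; split; [exact: s2 | exact: s1].
Qed.

Lemma Qm_nil M a : is_maximal_ideal M -> Qm M a -> exists u n, ~ M u /\ u * a ^+ n = 0.
Proof.
move=> hM Qa; apply: NNPP => hno.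
have [_ M1 _] := hM.
have [_ _ Mp] := max_prime hM.
pose S := fun x => exists u n, ~ M u /\ x = u * a ^+ n.
have [|||P [hP PS]] := @prime_exists S.
- by exists 1, 0%N; rewrite mul1r expr0.
- move=> x y [u [n [nu ->]]] [v [m [nv ->]]]; exists (u * v), (n + m)%N; split.
    by case/Mp.
  by rewrite exprD; ring.
- by move=> [u [n [nu e]]]; apply: hno; exists u, n; split.
have sP : subideal P M.
  move=> x Px; apply: NNPP => nx; apply: (PS x Px); exists x, 0%N; split => //.
  by rewrite expr0 mulr1.
apply: (PS a (Qa P hP sP)); exists 1, 1%N; split => //; by rewrite expr1 mul1r.
Qed.
End Aux.

Theorem proposition3p7 (R : comNzRingType) (hR : arithmetic R) :
  (exists P : R -> Prop, is_minimal_prime P /\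
     forall Q : R -> Prop, is_minimal_prime Q -> same_ideal Q P)
  <->
  (forall d : R, ~ jacobson d -> forall x : R, ann d x -> jacobson x).
Proof.
have PJ : forall P : R -> Prop, (forall Q, is_minimal_prime Q -> same_ideal Q P) ->
    forall y, P y -> jacobson y.
  move=> P hu y Py M hM.
  have := (hu _ (Qm_min hM (hR M hM)) y).2 Py.
  exact: Qm_sub.
split.
  move=> [P [hP hu]] d nd x hx.
  have [[[p0 _ _] _ pP] _] := hP.
  have := p0; rewrite -hx => /pP [Px|Pd].
    exact: (PJ P hu).
  by exfalso; apply: nd; apply: (PJ P hu).
move=> h2.
have hI0 : is_ideal (fun x : R => x = 0).
  by split => //; [move=> x y -> ->; rewrite addr0 | move=> r x ->; rewrite mulr0].
have [|M0 [hM0 _]] := max_exists hI0.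
  by move=> e; have := oner_neq0 R; rewrite e eqxx.
exists (Qm M0); split; first exact: Qm_min (hR M0 hM0).
move=> Q hQ.
have [[hQi hQ1 _] _] := hQ.
have [|M' [hM' sQ]] := max_exists hQi.
  exact: hQ1.
have e1 := min_in hM' (hR M' hM') hQ sQ.
have sub : subideal (Qm M0) M'.
  move=> a Qa; apply: NNPP => na.
  have [u [n [nu hu]]] := Qm_nil hM0 Qa.
  have [_ M'1 _] := hM'.
  have [_ _ M'p] := max_prime hM'.
  have nan : ~ M' (a ^+ n).
    elim: n {hu} => [|n IH]; first by rewrite expr0.
    by rewrite exprS => /M'p [].
  apply: nu; apply: (h2 (a ^+ n)) => //.
    by move=> hj; apply: nan; apply: hj.
have e2 := min_in hM' (hR M' hM') (Qm_min hM0 (hR M0 hM0)) sub.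
move=> x; rewrite e1; split => hx.
  by apply/e2.
by apply/e2.
Qed.
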